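(* Let $D=0.5$, $N_p\ge1$, and let $p_1,\dots,p_{N_p}$ be the PWM basis functions defined in the context. Let $f:[0,1]\to\mathbb R$ be any function such that: the restriction of $f$ to $[0,0.5)$ coincides with a polynomial of degree at most $N_p$; $f$ is continuous at $\tau=0.5$; and $f(\tau+0.5)=-f(\tau)$ for all $\tau\in[0,0.5]$. Then $f$ is a linear combination of $p_1,\dots,p_{N_p}$.
   Context: The PWM basis functions with duty cycle $D\in(0,1)$ are functions of the relative time $\tau\in[0,1]$, defined recursively as follows. Set $p_0(\tau)=1$ on $[0,1]$, and $$p_1(\tau)=\begin{cases}\sqrt3\,\dfrac{2\tau-D}{D}, & 0\le\tau\le D,\\[2mm] \sqrt3\,\dfrac{1+D-2\tau}{1-D}, & D\le\tau\le 1.\end{cases}$$ For $k\ge2$, define $p_k^\star(\tau)=\int_D^\tau p_{k-1}(\tau')\,d\tau'$, then $$\overline p_k(\tau)=p_k^\star(\tau)-\sum_{l=0}^{k-1}p_l(\tau)\int_0^1 p_l(s)\,p_k^\star(s)\,ds,\qquad p_k(\tau)=\frac{\overline p_k(\tau)}{\left(\int_0^1\overline p_k(s)^2\,ds\right)^{1/2}}.$$ *)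

(* Defs.v *)
From Stdlib Require Import Reals Lra List ClassicalEpsilon.
Open Scope R_scope.

(* Total version of the Riemann integral: RiemannInt when f is Riemann
   integrable on [a,b] (either orientation, as in Stdlib), 0 otherwise.
   RiemannInt does not depend on the integrability proof (RiemannInt_P5). *)
Definition Rint (f : R -> R) (a b : R) : R :=
  match excluded_middle_informative (inhabited (Riemann_integrable f a b)) with
  | left H => RiemannInt (epsilon H (fun _ => True))
  | right _ => 0
  end.

Definition pwm0 (D : R) : R -> R := fun _ => 1.

Definition pwm1 (D : R) : R -> R := fun t =>
  if Rle_dec t D then sqrt 3 * ((2 * t - D) / D)
  else sqrt 3 * ((1 + D - 2 * t) / (1 - D)).

Definition pwm_next (D : R) (L : list (R -> R)) : R -> R :=
  let plast := last L (fun _ => 0) in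
  let pstar := fun t => Rint plast D t in
  let pbar := fun t =>
    pstar t - fold_right Rplus 0
      (map (fun pl => pl t * Rint (fun s => pl s * pstar s) 0 1) L) in
  let nrm := sqrt (Rint (fun s => (pbar s) ^ 2) 0 1) in
  fun t => pbar t / nrm.

Fixpoint pwm_list (D : R) (k : nat) : list (R -> R) :=
  match k with
  | O => pwm0 D :: nil
  | S O => pwm0 D :: pwm1 D :: nil
  | S k' => let L := pwm_list D k' in L ++ (pwm_next D L :: nil)
  end.

Definition pwm (D : R) (k : nat) : R -> R := nth k (pwm_list D k) (fun _ => 0).

(* Main.v *)
Require Import Defs.
From Stdlib Require Import Reals Lra Lia List Classical ClassicalEpsilon.
From Coquelicot Require Import Coquelicot.
Open Scope R_scope.

Definition pol (c : nat -> R) (m : nat) (t : R) := sum_f_R0 (fun i => c i * t ^ i) m.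
Definition PL (m : nat) (l : R) (P : R -> R) :=
  exists c, c m = l /\ forall t, P t = pol c m t.

Lemma poly_shift c m t : pol c (S m) t = c 0%nat + t * pol (fun i => c (S i)) m t.
Proof.
  unfold pol. induction m.
  - simpl. ring.
  - change (sum_f_R0 (fun i => c i * t ^ i) (S (S m))) with
      (sum_f_R0 (fun i => c i * t ^ i) (S m) + c (S (S m)) * t ^ (S (S m))).
    rewrite IHm. simpl. ring.
Qed.

Lemma PL_const k : PL 0 k (fun _ => k).
Proof. exists (fun _ => k). split; auto. intros t. unfold pol; simpl. ring. Qed.

Lemma PL_zero m : PL m 0 (fun _ => 0).
Proof. exists (fun _ => 0). split; auto. intros t. unfold pol. induction m; simpl; [ring|rewrite <- IHm; ring]. Qed.

Lemma PL_weaken m l P : PL m l P -> PL (S m) 0 P.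
Proof.
  intros [c [Hl HP]]. exists (fun i => if Nat.leb i m then c i else 0). split.
  - assert (E: Nat.leb (S m) m = false) by (apply Nat.leb_gt; lia). cbv beta. rewrite E; auto.
  - intros t. rewrite HP. unfold pol.
    assert (E: Nat.leb (S m) m = false) by (apply Nat.leb_gt; lia).
    change (sum_f_R0 (fun i => (if Nat.leb i m then c i else 0) * t ^ i) (S m)) with
     (sum_f_R0 (fun i => (if Nat.leb i m then c i else 0) * t ^ i) m + (if Nat.leb (S m) m then c (S m) else 0) * t ^ (S m)).
    rewrite E.
    rewrite (sum_eq (fun i => (if Nat.leb i m then c i else 0) * t ^ i) (fun i => c i * t ^ i)). ring.
    intros i Hi. rewrite (proj2 (Nat.leb_le i m)); auto.
Qed.

Lemma PL_lin m l1 l2 P Q a b : PL m l1 P -> PL m l2 Q ->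
  PL m (a * l1 + b * l2) (fun t => a * P t + b * Q t).
Proof.
  intros [c [Hc HP]] [d [Hd HQ]]. exists (fun i => a * c i + b * d i). split.
  - rewrite Hc, Hd; auto.
  - intros t. rewrite HP, HQ. unfold pol. rewrite scal_sum, scal_sum, <- plus_sum.
    apply sum_eq. intros; ring.
Qed.

Lemma PL_drop m P : PL (S m) 0 P -> exists l, PL m l P.
Proof.
  intros [c [Hc HP]]. exists (c m). exists c. split; auto. intros t. rewrite HP.
  unfold pol. simpl. rewrite Hc. ring.
Qed.

Lemma PL_addconst m l P k : PL (S m) l P -> PL (S m) l (fun t => P t + k).
Proof.
  intros [c [Hc HP]]. exists (fun i => match i with O => c O + k | S j => c (S j) end).
  split; auto. intros t. rewrite HP, !poly_shift. ring.
Qed.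

Lemma PL_derive m l P : PL m l P -> forall t, ex_derive P t.
Proof.
  intros [c [_ HP]] t. apply (ex_derive_ext (pol c m)). { intros; rewrite HP; auto. }
  clear HP. revert c. induction m; intros c.
  - unfold pol; simpl. auto_derive. auto.
  - apply (ex_derive_ext (fun t => c 0%nat + t * pol (fun i => c (S i)) m t)).
    { intros; rewrite poly_shift; auto. }
    auto_derive. apply IHm.
Qed.

Lemma PL_cont m l P : PL m l P -> forall t, continuous P t.
Proof. intros H t. apply (@ex_derive_continuous R_AbsRing R_NormedModule). eapply PL_derive; eauto. Qed.

Lemma PL_prim m l P : PL m l P ->
  exists Q, PL (S m) (l / INR (S m)) Q /\ Q 0 = 0 /\ forall t, is_derive Q t (P t).
Proof.
  intros [c [Hc HP]].
  set (e := fun i => match i with O => 0 | S j => c j / INR (S j) end).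
  exists (pol e (S m)). split; [|split].
  - exists e. split; auto. simpl e. rewrite Hc. auto.
  - rewrite poly_shift. simpl. ring.
  - intros t. rewrite HP. clear HP Hc. revert t. induction m; intros t.
    + unfold pol. simpl. auto_derive; auto. simpl. field.
    + apply (is_derive_ext (fun t => pol e (S m) t + e (S (S m)) * t ^ (S (S m)))).
      { intros u. unfold pol. simpl. auto. }
      replace (pol c (S m) t) with (pol c m t + c (S m) * t ^ (S m)) by (unfold pol; simpl; auto).
      apply (is_derive_plus (pol e (S m)) (fun t => e (S (S m)) * t ^ (S (S m)))). apply IHm.
      simpl e. auto_derive; auto. rewrite <- !S_INR. simpl pow. field.
      destruct m; [lra|]. pose proof (pos_INR (S (S m))). lra.
Qed.

Lemma zero_lim g a b x : continuity_pt g x -> a < b -> a <= x <= b ->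
  (forall t, a < t < b -> g t = 0) -> g x = 0.
Proof.
  intros Hc Hab Hx Hz. destruct (Req_dec (g x) 0) as [E|E]; auto. exfalso.
  destruct (Hc (Rabs (g x))) as [alp [Halp H]]. { apply Rabs_pos_lt; auto. }
  set (d := Rmin alp ((b - a) / 2) / 2).
  assert (Hd : 0 < d). { unfold d. apply Rmin_case; lra. }
  assert (Hd1 : d <= alp / 2) by (unfold d; pose proof (Rmin_l alp ((b-a)/2)); lra).
  assert (Hd2 : d <= (b - a) / 4) by (unfold d; pose proof (Rmin_r alp ((b-a)/2)); lra).
  destruct (Rlt_le_dec x ((a + b) / 2)) as [Hl|Hl].
  - specialize (H (x + d)). rewrite Hz in H by lra. simpl in H. unfold R_dist in H.
    rewrite Rminus_0_l, Rabs_Ropp in H. apply (Rlt_irrefl (Rabs (g x))). apply H.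
    split. split; [exact I| lra]. replace (x + d - x) with d by ring. rewrite Rabs_right; lra.
  - specialize (H (x - d)). rewrite Hz in H by lra. simpl in H. unfold R_dist in H.
    rewrite Rminus_0_l, Rabs_Ropp in H. apply (Rlt_irrefl (Rabs (g x))). apply H.
    split. split; [exact I| lra]. replace (x - d - x) with (- d) by ring. rewrite Rabs_Ropp, Rabs_right; lra.
Qed.

Lemma cont_pt_of m l P x : PL m l P -> continuity_pt P x.
Proof. intros H. apply continuity_pt_filterlim. apply (PL_cont m l P H). Qed.

Lemma PL_nonzero m : forall l P, PL m l P -> l <> 0 -> exists t, 0 < t < 1/2 /\ P t <> 0.
Proof.
  induction m; intros l P [c [Hc HP]] Hl.
  - exists (1/4). split; [lra|]. rewrite HP. unfold pol; simpl. rewrite Hc. lra.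
  - apply NNPP. intros Hn.
    assert (Hz : forall t, 0 < t < 1/2 -> P t = 0).
    { intros t Ht. apply NNPP. intros H'. apply Hn. exists t; auto. }
    assert (HPL : PL (S m) l P) by (exists c; auto).
    assert (H0 : P 0 = 0).
    { apply (zero_lim P 0 (1/2)). apply (cont_pt_of _ _ _ _ HPL). lra. lra. exact Hz. }
    assert (Hc0 : c 0%nat = 0).
    { rewrite HP, poly_shift in H0. lra. }
    destruct (IHm l (pol (fun i => c (S i)) m)) as [t [Ht Hne]].
    { exists (fun i => c (S i)). split; auto. }
    auto. apply Hne. specialize (Hz t Ht). rewrite HP, poly_shift, Hc0 in Hz.
    rewrite Rplus_0_l in Hz. apply Rmult_integral in Hz. destruct Hz; auto; lra.
Qed.

Lemma Rint_RInt f a b : ex_RInt f a b -> Rint f a b = RInt f a b.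
Proof.
  intros H. unfold Rint. destruct excluded_middle_informative as [Hi|Hn].
  - rewrite (RInt_Reals f a b (epsilon Hi (fun _ => True))). auto.
  - exfalso. apply Hn. constructor. apply ex_RInt_Reals_0. auto.
Qed.

Definition Cont (g : R -> R) := forall x, continuous g x.

Lemma Cont_shift g v : Cont g -> Cont (fun s => g (s + v)).
Proof.
  intros H x. apply (continuous_comp (fun s => s + v) g).
  - apply (continuous_plus (fun s : R => s) (fun _ => v)). apply continuous_id. apply continuous_const.
  - apply H.
Qed.

Lemma PW h P1 P2 : Cont P1 -> Cont P2 ->
  (forall t, 0 <= t <= 1/2 -> h t = P1 t /\ h (t + 1/2) = P2 t) ->
  ex_RInt h 0 1 /\ RInt h 0 1 = RInt P1 0 (1/2) + RInt P2 0 (1/2).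
Proof.
  intros C1 C2 H.
  assert (E1 : ex_RInt h 0 (1/2)).
  { apply (ex_RInt_ext P1). { intros x Hx. rewrite Rmin_left, Rmax_right in Hx by lra.
      symmetry. apply H. lra. }
    apply (@ex_RInt_continuous R_CompleteNormedModule). intros; apply C1. }
  assert (Eq2 : forall x, Rmin (1/2) 1 < x < Rmax (1/2) 1 -> P2 (x + - (1/2)) = h x).
  { intros x Hx. rewrite Rmin_left, Rmax_right in Hx by lra.
    replace x with (x + - (1/2) + 1/2) at 2 by ring. symmetry. apply H. lra. }
  assert (E2 : ex_RInt h (1/2) 1).
  { apply (ex_RInt_ext (fun x => P2 (x + - (1/2)))). exact Eq2.
    apply (@ex_RInt_continuous R_CompleteNormedModule). intros; apply Cont_shift; auto. }
  split. { apply (ex_RInt_Chasles _ _ (1/2)); auto. }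
  rewrite <- (RInt_Chasles h 0 (1/2) 1) by auto.
  rewrite (RInt_ext h P1 0 (1/2)).
  2:{ intros x Hx. rewrite Rmin_left, Rmax_right in Hx by lra. apply H. lra. }
  rewrite <- (RInt_ext (fun x => P2 (x + - (1/2))) h (1/2) 1) by exact Eq2.
  assert (HC := RInt_comp_lin P2 1 (- (1/2)) (1/2) 1).
  replace (1 * (1/2) + - (1/2)) with 0 in HC by lra.
  replace (1 * 1 + - (1/2)) with (1/2) in HC by lra.
  rewrite <- HC. 2:{ apply (@ex_RInt_continuous R_CompleteNormedModule). intros; apply C2. }
  unfold plus; simpl. f_equal. apply RInt_ext. intros x _. replace (1*x + -(1/2)) with (x + -(1/2)) by lra. unfold scal; simpl; unfold mult; simpl. ring.
Qed.

Lemma ex_cont g a b : Cont g -> ex_RInt g a b.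
Proof. intros C. apply (@ex_RInt_continuous R_CompleteNormedModule). intros; apply C. Qed.

Lemma RInt_pos g : Cont g -> (forall x, 0 <= g x) ->
  (exists t0, 0 < t0 < 1/2 /\ 0 < g t0) -> 0 < RInt g 0 (1/2).
Proof.
  intros C Hg [t0 [Ht0 Hp]].
  assert (Hc : continuity_pt g t0) by (apply continuity_pt_filterlim; apply C).
  destruct (Hc (g t0 / 2)) as [del [Hdel Hd]]. lra.
  set (e := Rmin del (Rmin t0 (1/2 - t0)) / 2).
  assert (He : 0 < e) by (unfold e; repeat apply Rmin_case; lra).
  assert (He1 : e <= del / 2) by (unfold e; pose proof (Rmin_l del (Rmin t0 (1/2 - t0))); lra).
  assert (He2 : e <= t0 / 2) by (unfold e; pose proof (Rmin_r del (Rmin t0 (1/2 - t0)));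
     pose proof (Rmin_l t0 (1/2 - t0)); lra).
  assert (He3 : e <= (1/2 - t0) / 2) by (unfold e; pose proof (Rmin_r del (Rmin t0 (1/2 - t0)));
     pose proof (Rmin_r t0 (1/2 - t0)); lra).
  rewrite <- (RInt_Chasles g 0 (t0 - e) (1/2)) by apply ex_cont, C.
  rewrite <- (RInt_Chasles g (t0 - e) (t0 + e) (1/2)) by apply ex_cont, C.
  unfold plus; simpl.
  assert (A1 : 0 <= RInt g 0 (t0 - e)) by (apply RInt_ge_0; [lra|apply ex_cont, C|intros; apply Hg]).
  assert (A3 : 0 <= RInt g (t0 + e) (1/2)) by (apply RInt_ge_0; [lra|apply ex_cont, C|intros; apply Hg]).
  assert (A2 : 0 < RInt g (t0 - e) (t0 + e)).
  { apply RInt_gt_0; [lra| |intros; apply C]. intros x Hx.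
    destruct (Req_dec x t0) as [->|Hne]; [lra|].
    specialize (Hd x). simpl in Hd. unfold R_dist in Hd.
    assert (Rabs (g x - g t0) < g t0 / 2).
    { apply Hd. split. split; [exact I| auto]. apply Rabs_def1; lra. }
    apply Rabs_def2 in H. lra. }
  lra.
Qed.

Lemma Cont_opp g : Cont g -> Cont (fun x => - g x).
Proof. intros C x. apply (continuous_opp g x (C x)). Qed.

Lemma Cont_sq g : Cont g -> Cont (fun x => g x ^ 2).
Proof.
  intros C x. apply (continuous_ext (fun x => mult (g x) (g x))).
  { intros y. unfold mult; simpl. ring. }
  apply (continuous_mult g g x (C x) (C x)).
Qed.

Lemma Cont_PL m l P : PL m l P -> Cont P.
Proof. intros H x. apply (PL_cont m l P H). Qed.

Definition AS m l (g : R -> R) := exists P, PL m l P /\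
  forall t, 0 <= t <= 1/2 -> g t = P t /\ g (t + 1/2) = - P t.

Lemma AS_ext m l g h : (forall t, g t = h t) -> AS m l g -> AS m l h.
Proof. intros E [P [HP H]]. exists P. split; auto. intros t Ht. rewrite <- !E. auto. Qed.

Lemma AS_lin m l1 l2 g1 g2 a b : AS m l1 g1 -> AS m l2 g2 ->
  AS m (a * l1 + b * l2) (fun t => a * g1 t + b * g2 t).
Proof.
  intros [P [HP H1]] [Q [HQ H2]]. exists (fun t => a * P t + b * Q t). split.
  apply PL_lin; auto. intros t Ht. destruct (H1 t Ht), (H2 t Ht).
  rewrite H, H0, H3, H4. split; ring.
Qed.

Lemma AS_zero m : AS m 0 (fun _ => 0).
Proof. exists (fun _ => 0). split. apply PL_zero. intros; split; ring. Qed.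

Lemma AS_weaken m l g : AS m l g -> AS (S m) 0 g.
Proof. intros [P [HP H]]. exists P. split; auto. apply (PL_weaken m l P HP). Qed.

Lemma AS_drop m g : AS (S m) 0 g -> exists l, AS m l g.
Proof. intros [P [HP H]]. destruct (PL_drop m P HP) as [l Hl]. exists l, P. auto. Qed.

Lemma AS_fold m (w : (R -> R) -> R) L : List.Forall (fun g => exists l, AS m l g) L ->
  exists l, AS m l (fun t => fold_right Rplus 0 (map (fun pl => pl t * w pl) L)).
Proof.
  induction 1.
  - exists 0. apply AS_zero.
  - destruct H as [l1 H1]. destruct IHForall as [l2 H2].
    exists (w x * l1 + 1 * l2).
    apply (AS_ext _ _ (fun t => w x * x t + 1 * fold_right Rplus 0 (map (fun pl => pl t * w pl) l))).
    { intros t. simpl. ring. }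
    apply AS_lin; auto.
Qed.

Lemma pstar_val k l plast : AS k l plast -> exists Q lq,
  PL (S k) lq Q /\ lq = l / INR (S k) /\
  forall t, 0 <= t <= 1/2 ->
    Rint plast (1/2) t = Q t - Q (1/2) /\ Rint plast (1/2) (t + 1/2) = - Q t.
Proof.
  intros [P [HP Hrep]]. destruct (PL_prim _ _ _ HP) as [Q [HQ [Q0 HdQ]]].
  exists Q, (l / INR (S k)). split; auto. split; auto.
  assert (CP := Cont_PL _ _ _ HP).
  intros t Ht. split.
  - assert (E : forall x, Rmin (1/2) t < x < Rmax (1/2) t -> P x = plast x).
    { intros x Hx. rewrite Rmin_right, Rmax_left in Hx by lra. symmetry; apply Hrep; lra. }
    rewrite Rint_RInt. 2:{ apply (ex_RInt_ext P); auto. apply ex_cont; auto. }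
    rewrite <- (RInt_ext _ _ _ _ E).
    apply is_RInt_unique. apply (is_RInt_derive Q P). intros; apply HdQ. intros; apply CP.
  - set (G := fun s => - P (s + - (1/2))).
    assert (CG : Cont G) by (apply Cont_opp, Cont_shift; auto).
    assert (E : forall x, Rmin (1/2) (t + 1/2) < x < Rmax (1/2) (t + 1/2) -> G x = plast x).
    { intros x Hx. rewrite Rmin_left, Rmax_right in Hx by lra. unfold G.
      replace x with (x + - (1/2) + 1/2) at 2 by ring. symmetry; apply Hrep; lra. }
    rewrite Rint_RInt. 2:{ apply (ex_RInt_ext G); auto. apply ex_cont; auto. }
    rewrite <- (RInt_ext _ _ _ _ E).
    rewrite (is_RInt_unique G (1/2) (t + 1/2) (minus ((fun s => - Q (s + - (1/2))) (t + 1/2))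
             ((fun s => - Q (s + - (1/2))) (1/2)))).
    + unfold minus, plus, opp; simpl. replace (t + 1/2 + - (1/2)) with t by ring.
      replace (1/2 + - (1/2)) with 0 by ring. rewrite Q0. ring.
    + apply (is_RInt_derive (fun s => - Q (s + - (1/2))) G). 2:{ intros; apply CG. }
      intros x _. unfold G.
      apply (is_derive_ext (fun s => opp (Q (s + - (1/2))))). { intros; reflexivity. }
      replace (- P (x + - (1/2))) with (opp (scal 1 (P (x + - (1/2))))).
      2:{ unfold opp, scal; simpl; unfold mult; simpl. ring. }
      apply (@is_derive_opp R_AbsRing R_NormedModule (fun s => Q (s + - (1/2)))). apply (@is_derive_comp R_AbsRing R_NormedModule Q (fun s => s + - (1/2))). apply HdQ.
      auto_derive; auto. 
Qed.

Lemma I0_val ps Q : Cont Q ->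
  (forall t, 0 <= t <= 1/2 -> ps t = Q t - Q (1/2) /\ ps (t + 1/2) = - Q t) ->
  Rint (fun s => pwm0 (1/2) s * ps s) 0 1 = - Q (1/2) / 2.
Proof.
  intros CQ H.
  assert (C1 : Cont (fun t => Q t - Q (1/2))).
  { intros x. apply (continuous_ext (fun t => minus (Q t) (Q (1/2)))). { intros; reflexivity. }
    apply (continuous_minus Q (fun _ => Q (1/2))). apply CQ. apply continuous_const. }
  destruct (PW (fun s => pwm0 (1/2) s * ps s) (fun t => Q t - Q (1/2)) (fun t => - Q t) C1
    (Cont_opp _ CQ)) as [Ex Eq].
  { intros t Ht. unfold pwm0. destruct (H t Ht) as [A B]. rewrite A, B. split; ring. }
  rewrite Rint_RInt by auto. rewrite Eq.
  change (RInt (fun t => Q t - Q (1/2)) 0 (1/2) + RInt (fun t => - Q t) 0 (1/2)) with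
    (plus (RInt (fun t => Q t - Q (1/2)) 0 (1/2)) (RInt (fun t => - Q t) 0 (1/2))).
  rewrite <- RInt_plus by (apply ex_cont; auto; apply Cont_opp; auto).
  rewrite (RInt_ext _ (fun _ => - Q (1/2))).
  2:{ intros. unfold plus; simpl. ring. }
  rewrite RInt_const. unfold scal; simpl; unfold mult; simpl. field.
Qed.

Lemma step k L' : List.Forall (fun g => exists l, AS (S k) l g) L' ->
  (exists l, l <> 0 /\ AS (S k) l (last (pwm0 (1/2) :: L') (fun _ => 0))) ->
  exists l, l <> 0 /\ AS (S (S k)) l (pwm_next (1/2) (pwm0 (1/2) :: L')).
Proof.
  intros HF [l [hl Hlast]].
  set (L := pwm0 (1/2) :: L').
  set (plast := last L (fun _ => 0)).
  destruct (pstar_val _ _ _ Hlast) as [Q [lq [HQ [Hlq Hps]]]].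
  set (ps := fun t => Rint plast (1/2) t).
  assert (HI0 := I0_val ps Q (Cont_PL _ _ _ HQ) Hps).
  set (w := fun pl : R -> R => Rint (fun s => pl s * ps s) 0 1).
  destruct (AS_fold (S k) w L' HF) as [ls [Ps [HPs HPsrep]]].
  set (pbar := fun t => ps t - fold_right Rplus 0 (map (fun pl => pl t * w pl) L)).
  assert (Hlq0 : lq <> 0).
  { rewrite Hlq. apply Rmult_integral_contrapositive_currified; auto.
    apply Rinv_neq_0_compat. apply not_0_INR. lia. }
  assert (Hpb : AS (S (S k)) lq pbar).
  { exists (fun t => 1 * (Q t + (- Q (1/2) - w (pwm0 (1/2)))) + (-1) * Ps t). split.
    - replace lq with (1 * lq + (-1) * 0) at 1 by ring. apply PL_lin.
      apply PL_addconst; auto. apply (PL_weaken _ _ _ HPs).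
    - intros t Ht. destruct (Hps t Ht) as [A B]. destruct (HPsrep t Ht) as [C E].
      assert (HI0' : w (pwm0 (1/2)) = - Q (1/2) / 2) by exact HI0.
      unfold pbar, L. cbn [fold_right map]. unfold ps, plast, L. rewrite A, B, C, E, HI0'.
      unfold pwm0. split; field. }
  set (nrm := sqrt (Rint (fun s => pbar s ^ 2) 0 1)).
  assert (Hnrm : 0 < nrm).
  { destruct Hpb as [Pb [HPb HPbrep]].
    assert (CPb := Cont_PL _ _ _ HPb).
    destruct (PW (fun s => pbar s ^ 2) (fun t => Pb t ^ 2) (fun t => (- Pb t) ^ 2)
       (Cont_sq _ CPb) (Cont_sq _ (Cont_opp _ CPb))) as [Ex Eq].
    { intros t Ht. destruct (HPbrep t Ht) as [A B]. rewrite A, B. auto. }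
    unfold nrm. apply sqrt_lt_R0. rewrite Rint_RInt by auto. rewrite Eq.
    assert (0 < RInt (fun t => Pb t ^ 2) 0 (1/2)).
    { apply RInt_pos. apply Cont_sq; auto. intros; apply pow2_ge_0.
      destruct (PL_nonzero _ _ _ HPb Hlq0) as [t0 [Ht0 Hne]]. exists t0. split; auto.
      apply pow2_gt_0; auto. }
    assert (0 <= RInt (fun t => (- Pb t) ^ 2) 0 (1/2)).
    { apply RInt_ge_0. lra. apply ex_cont, Cont_sq, Cont_opp; auto. intros; apply pow2_ge_0. }
    lra. }
  change (pwm_next (1/2) L) with (fun t => pbar t / nrm).
  exists (/ nrm * lq + 0 * 0). split.
  - rewrite Rmult_0_l, Rplus_0_r. apply Rmult_integral_contrapositive_currified; auto.
    apply Rinv_neq_0_compat; lra.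
  - apply (AS_ext _ _ (fun t => / nrm * pbar t + 0 * 0)).
    { intros t. unfold Rdiv. ring. }
    apply AS_lin; auto. apply AS_zero.
Qed.

Lemma pwm_len D k : length (pwm_list D k) = S k.
Proof.
  induction k as [|[|k] IH]; auto.
  change (pwm_list D (S (S k))) with (pwm_list D (S k) ++ (pwm_next D (pwm_list D (S k)) :: nil)).
  rewrite length_app, IH. simpl. lia.
Qed.

Lemma pwm_SS D k : pwm D (S (S k)) = pwm_next D (pwm_list D (S k)).
Proof.
  unfold pwm. change (pwm_list D (S (S k))) with (pwm_list D (S k) ++ (pwm_next D (pwm_list D (S k)) :: nil)).
  rewrite app_nth2; rewrite pwm_len; [|lia]. replace (S (S k) - S (S k))%nat with 0%nat by lia. reflexivity.
Qed.

Lemma pwm_last D k : last (pwm_list D (S k)) (fun _ => 0) = pwm D (S k).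
Proof.
  destruct k. reflexivity.
  rewrite pwm_SS. change (pwm_list D (S (S k))) with (pwm_list D (S k) ++ (pwm_next D (pwm_list D (S k)) :: nil)).
  apply last_last.
Qed.

Lemma AS_p1 : AS 1 (4 * sqrt 3) (pwm1 (1/2)).
Proof.
  exists (fun t => - sqrt 3 + 4 * sqrt 3 * t). split.
  - exists (fun i => match i with O => - sqrt 3 | _ => 4 * sqrt 3 end). split; auto.
    intros t. unfold pol; simpl. ring.
  - intros t Ht. unfold pwm1. split.
    + destruct (Rle_dec t (1/2)); [|lra]. field.
    + destruct (Rle_dec (t + 1/2) (1/2)).
      * assert (t = 0) by lra. subst. field.
      * field.
Qed.

Lemma inv_all k : exists L', pwm_list (1/2) (S k) = pwm0 (1/2) :: L' /\
  List.Forall (fun g => exists l, AS (S k) l g) L' /\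
  exists l, l <> 0 /\ AS (S k) l (pwm (1/2) (S k)).
Proof.
  induction k as [|k [L' [HL [HF Hl]]]].
  - exists (pwm1 (1/2) :: nil). split; [reflexivity|]. split.
    + constructor; [|constructor]. exists (4 * sqrt 3). apply AS_p1.
    + exists (4 * sqrt 3). split. 
      * apply Rmult_integral_contrapositive_currified; [lra|]. apply Rgt_not_eq, sqrt_lt_R0; lra.
      * apply AS_p1.
  - assert (Hs : exists l, l <> 0 /\ AS (S (S k)) l (pwm_next (1/2) (pwm0 (1/2) :: L'))).
    { apply step; auto. rewrite <- HL, pwm_last. auto. }
    exists (L' ++ pwm_next (1/2) (pwm0 (1/2) :: L') :: nil). split; [|split].
    + change (pwm_list (1/2) (S (S k))) with (pwm_list (1/2) (S k) ++ (pwm_next (1/2) (pwm_list (1/2) (S k)) :: nil)).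
      rewrite HL. reflexivity.
    + apply Forall_app. split.
      * refine (Forall_impl _ _ HF). intros g [l Hg]. exists 0. apply (AS_weaken _ _ _ Hg).
      * constructor; [|constructor]. destruct Hs as [l [_ H]]. exists l; auto.
    + rewrite pwm_SS, HL. auto.
Qed.

Fixpoint psum (a : nat -> R) (n : nat) (t : R) : R :=
  match n with O => 0 | S n => psum a n t + a (S n) * pwm (1/2) (S n) t end.

Lemma psum_ext a b n t : (forall k, (1 <= k <= n)%nat -> a k = b k) -> psum a n t = psum b n t.
Proof.
  induction n; intros H; simpl; auto. rewrite IHn by (intros; apply H; lia). rewrite H by lia. auto.
Qed.

Lemma psum_sum a n t : psum a (S n) t = sum_f_R0 (fun k => a (S k) * pwm (1/2) (S k) t) n.
Proof. induction n. simpl. ring. change (psum a (S (S n)) t) with (psum a (S n) t + a (S (S n)) * pwm (1/2) (S (S n)) t).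
  rewrite IHn. reflexivity. Qed.

Lemma pwm_anti k t : 0 <= t <= 1/2 -> pwm (1/2) (S k) (t + 1/2) = - pwm (1/2) (S k) t.
Proof.
  intros Ht. destruct (inv_all k) as [L0 [_ [_ [l0 [_ [P [_ H]]]]]]]. destruct (H t Ht) as [A B].
  rewrite A, B. auto.
Qed.

Lemma psum_anti a n t : 0 <= t <= 1/2 -> psum a n (t + 1/2) = - psum a n t.
Proof. intros Ht. induction n; simpl. ring. rewrite IHn, pwm_anti by auto. ring. Qed.

Lemma span m : forall g l, AS m l g -> exists a, forall t, 0 <= t <= 1/2 -> g t = psum a m t.
Proof.
  induction m; intros g l Hg.
  - destruct Hg as [P [[c [Hc HP]] Hrep]]. exists (fun _ => 0). intros t Ht. simpl.
    destruct (Hrep 0) as [_ B]. lra. destruct (Hrep (1/2)) as [A _]. lra.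
    replace (0 + 1/2) with (1/2) in B by ring.
    rewrite HP in A, B. unfold pol in A, B. simpl in A, B.
    destruct (Hrep t Ht) as [E _]. rewrite E, HP. unfold pol; simpl. lra.
  - destruct (inv_all m) as [L0 [_ [_ [d [Hd Hp]]]]].
    assert (H1 := AS_lin _ _ _ _ _ 1 (- (l / d)) Hg Hp).
    replace (1 * l + - (l / d) * d) with 0 in H1 by (field; auto).
    destruct (AS_drop _ _ H1) as [l' H2]. destruct (IHm _ _ H2) as [a' Ha'].
    exists (fun k => if Nat.eqb k (S m) then l / d else a' k). intros t Ht.
    simpl. rewrite Nat.eqb_refl. rewrite (psum_ext _ a').
    2:{ intros k Hk. destruct (Nat.eqb_spec k (S m)); [lia|auto]. }
    rewrite <- Ha' by auto. ring.
Qed.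

Theorem mainTheorem3 (Np : nat) (HNp : (1 <= Np)%nat) (f : R -> R)
  (Hpoly : exists c : nat -> R, forall t : R, 0 <= t < 1/2 ->
             f t = sum_f_R0 (fun i => c i * t ^ i) Np)
  (Hcont : continuity_pt f (1/2))
  (Hanti : forall t : R, 0 <= t <= 1/2 -> f (t + 1/2) = - f t) :
  exists a : nat -> R, forall t : R, 0 <= t <= 1 ->
    f t = sum_f_R0 (fun k => a (S k) * pwm (1/2) (S k) t) (Np - 1).
Proof.
  destruct Hpoly as [c Hc].
  assert (HP : PL Np (c Np) (pol c Np)) by (exists c; auto).
  assert (Hhalf : f (1/2) = pol c Np (1/2)).
  { assert (f (1/2) - pol c Np (1/2) = 0); [|lra].
    apply (zero_lim (fun t => f t - pol c Np t) 0 (1/2)).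
    - apply continuity_pt_minus; auto. apply (cont_pt_of _ _ _ _ HP).
    - lra.
    - lra.
    - intros t Ht. rewrite Hc by lra. unfold pol. ring. }
  assert (HAS : AS Np (c Np) f).
  { exists (pol c Np). split; auto. intros t Ht.
    assert (E : f t = pol c Np t).
    { destruct (Rlt_le_dec t (1/2)). apply Hc; lra. replace t with (1/2) by lra. auto. }
    rewrite Hanti by auto. rewrite E. auto. }
  destruct (span _ _ _ HAS) as [a Ha]. exists a. intros t Ht.
  replace (Np - 1)%nat with (pred Np) by lia.
  rewrite <- psum_sum. replace (S (pred Np)) with Np by lia.
  destruct (Rle_dec t (1/2)). apply Ha; lra.
  replace t with ((t - 1/2) + 1/2) by ring.
  rewrite Hanti, psum_anti by lra. rewrite Ha by lra. auto.
Qed.
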